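(* Let $I$ be a closed interval, and let $F=(f,g)\colon I\to\mathbb{R}^2$ and $G\colon\mathbb{R}^2\to I$ be continuous functions such that $\mathscr{L}_{F,G}$ is a repetition invariant mean on $I$ without a negligible element. Suppose additionally that $g$ is positive on $I$. Then $f/g$ is injective on $I$.
   Context: A mean on $I$ is a function $\mathscr{M}\colon\bigcup_{n\ge1}I^n\to I$ with $\min(a)\le\mathscr{M}(a)\le\max(a)$. Here $\mathscr{L}_{F,G}(a_1,\dots,a_n):=G(F(a_1)+\cdots+F(a_n))$. $\mathscr{M}$ is repetition invariant if $\mathscr{M}(x_1,\dots,x_1,\dots,x_n,\dots,x_n)=\mathscr{M}(x_1,\dots,x_n)$ for all $n,m\in\mathbb{N}$ and $(x_1,\dots,x_n)\in I^n$, each $x_i$ repeated $m$ times on the left. An element $e\in I$ is a negligible element of $\mathscr{M}$ if for every $a=(a_1,\dots,a_n)\in I^n$ with $n\ge2$ and every $s$ with $a_s=e$, $\mathscr{M}(a)=\mathscr{M}((a_i)_{i\ne s})$. *)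

(* Defs.v *)
From HB Require Import structures.
From mathcomp Require Import all_boot all_order all_algebra.
From mathcomp Require Import all_classical all_reals all_analysis.
Set Implicit Arguments. Unset Strict Implicit. Unset Printing Implicit Defensive.
Import Order.TTheory GRing.Theory Num.Theory.
Local Open Scope ring_scope.

Section Defs.
Variable R : realType.

(* the quasi-arithmetic-type mean L_{F,G}(a_1,...,a_n) = G(F(a_1)+...+F(a_n)),
   with F = (f,g) : R -> R^2 (sum taken componentwise) *)
Definition LFG (f g : R -> R) (G : R * R -> R) (s : seq R) : R :=
  G (\sum_(x <- s) f x, \sum_(x <- s) g x).

(* M is a mean on the closed interval I = [a, b], defined on
   nonempty finite sequences of points of I: min(s) <= M(s) <= max(s) *)
Definition is_mean_on (a b : R) (M : seq R -> R) : Prop :=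
  forall s : seq R, s != [::] -> all (fun x => x \in `[a, b]) s ->
    (exists2 x, x \in s & x <= M s) /\ (exists2 y, y \in s & M s <= y).

Definition repetition_invariant (a b : R) (M : seq R -> R) : Prop :=
  forall (s : seq R) (m : nat), s != [::] -> all (fun x => x \in `[a, b]) s -> (0 < m)%N ->
    M (flatten [seq nseq m x | x <- s]) = M s.

Definition delete_at (s : seq R) (i : nat) : seq R := take i s ++ drop i.+1 s.

Definition negligible_element (a b : R) (M : seq R -> R) (e : R) : Prop :=
  e \in `[a, b] /\
  forall (s : seq R) (i : nat), (2 <= size s)%N -> all (fun x => x \in `[a, b]) s -> (i < size s)%N ->
    nth 0 s i = e -> M s = M (delete_at s i).

End Defs.

(* Main.v *)
Require Import Defs.
From HB Require Import structures.
From mathcomp Require Import all_boot all_order all_algebra.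
From mathcomp Require Import all_classical all_reals all_analysis.
From mathcomp Require Import zify ring lra.
Import Order.TTheory GRing.Theory Num.Theory.
Import numFieldNormedType.Exports.
Local Open Scope classical_set_scope.
Local Open Scope ring_scope.


Definition stepl (u v : int * int) : Prop :=
  (u.1 = v.1 /\ -1 <= u.2 - v.2 <= 1) \/ (u.2 = v.2 /\ -1 <= u.1 - v.1 <= 1).

Definition ee (u v : int * int) (X Y : int) : int :=
  if (u.2 == v.2) && (u.2 < Y) then
    (if (u.1 == X) && (v.1 == X + 1) then 1
     else if (u.1 == X + 1) && (v.1 == X) then -1 else 0)
  else 0.

Definition chi (w : int * int) (X Y : int) : int :=
  if (w.1 == X + 1) && (w.2 < Y) then 1 else 0.

Lemma ee_vert u v X Y : stepl u v -> u <> (X, Y) -> v <> (X, Y) ->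
  ee u v X (Y + 1) = ee u v X Y.
Proof.
case: u => u1 u2; case: v => v1 v2; rewrite /stepl /ee /= => st n1 n2.
have n1' : ~ (u1 = X /\ u2 = Y) by move=> [e1 e2]; subst.
have n2' : ~ (v1 = X /\ v2 = Y) by move=> [e1 e2]; subst.
repeat case: ifP; lia.
Qed.

Lemma ee_horiz u v X Y : stepl u v -> u <> (X + 1, Y) -> v <> (X + 1, Y) ->
  ee u v X Y - ee u v (X + 1) Y = chi v X Y - chi u X Y.
Proof.
case: u => u1 u2; case: v => v1 v2; rewrite /stepl /ee /chi /= => st n1 n2.
have n1' : ~ (u1 = X + 1 /\ u2 = Y) by move=> [e1 e2]; subst.
have n2' : ~ (v1 = X + 1 /\ v2 = Y) by move=> [e1 e2]; subst.
repeat case: ifP; lia.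
Qed.

Section HPL.
Variables (P Q : nat -> int * int) (L M : nat).
Hypothesis stP : forall k, (k < L)%N -> stepl (P k) (P k.+1).
Hypothesis stQ : forall k, (k < M)%N -> stepl (Q k) (Q k.+1).
Hypothesis posP : forall k, (k <= L)%N -> 0 <= (P k).2.
Hypothesis posQ : forall k, (k <= M)%N -> 0 <= (Q k).2.
Hypothesis P0 : (P 0).2 = 0.
Hypothesis PL : (P L).2 = 0.
Hypothesis Q0 : (Q 0).2 = 0.
Hypothesis QM : (Q M).2 = 0.
Hypothesis ord : [/\ (P 0).1 < (Q 0).1, (Q 0).1 < (P L).1 & (P L).1 < (Q M).1].

Let omega X Y : int := \sum_(k < L) ee (P k) (P k.+1) X Y.

Let onP w := exists2 k, (k <= L)%N & P k = w.

Lemma omega_vert X Y : ~ onP (X, Y) -> omega X (Y + 1) = omega X Y.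
Proof.
move=> nP; apply: eq_bigr => -[k /= kL] _; apply: ee_vert; first exact: stP.
  by move=> e; apply: nP; exists k => //; exact: ltnW.
by move=> e; apply: nP; exists k.+1.
Qed.

Lemma omega_horiz X Y : ~ onP (X + 1, Y) ->
  omega X Y - omega (X + 1) Y = chi (P L) X Y - chi (P 0) X Y.
Proof.
move=> nP; rewrite /omega -sumrB.
rewrite (eq_bigr (fun k : 'I_L => chi (P k.+1) X Y - chi (P k) X Y)).
  by rewrite -(big_mkord xpredT (fun k => chi (P k.+1) X Y - chi (P k) X Y)) telescope_sumr.
move=> -[k /= kL] _; apply: ee_horiz; first exact: stP.
  by move=> e; apply: nP; exists k => //; exact: ltnW.
by move=> e; apply: nP; exists k.+1.
Qed.

Let Pi (w : int * int) : int := omega w.1 w.2 + (if (P L).1 <= w.1 then 1 else 0)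
   - (if (P 0).1 <= w.1 then 1 else 0).

Lemma Pi_step w w' : stepl w w' -> ~ onP w -> ~ onP w' -> 0 <= w.2 -> 0 <= w'.2 ->
  Pi w = Pi w'.
Proof.
have [r1 r2 r3] := ord.
case: w => X Y; case: w' => X' Y'; rewrite /Pi /= => st nw nw' Y0 Y'0.
have nL : ~ ((P L).1 = X /\ Y = 0).
  by move=> [e1 e2]; apply: nw; exists L => //; rewrite [P L]surjective_pairing PL e1 e2.
have nL' : ~ ((P L).1 = X' /\ Y' = 0).
  by move=> [e1 e2]; apply: nw'; exists L => //; rewrite [P L]surjective_pairing PL e1 e2.
have n0 : ~ ((P 0).1 = X /\ Y = 0).
  by move=> [e1 e2]; apply: nw; exists 0%N => //; rewrite [P 0]surjective_pairing P0 e1 e2.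
have n0' : ~ ((P 0).1 = X' /\ Y' = 0).
  by move=> [e1 e2]; apply: nw'; exists 0%N => //; rewrite [P 0]surjective_pairing P0 e1 e2.
case: st => /= [[eX hY]|[eY hX]].
  subst X'.
  have [e|[e|e]] : Y' = Y + 1 \/ Y = Y' + 1 \/ Y' = Y by lia.
  - by subst Y'; rewrite omega_vert.
  - by subst Y; rewrite omega_vert.
  - by subst Y'.
subst Y'.
have [e|[e|e]] : X' = X + 1 \/ X = X' + 1 \/ X' = X by lia.
- subst X'; have := omega_horiz X Y nw'.
  rewrite /chi PL P0; move: (omega X Y) (omega (X + 1) Y) => w1 w2; repeat case: ifP; lia.
- subst X; have := omega_horiz X' Y nw.
  rewrite /chi PL P0; move: (omega X' Y) (omega (X' + 1) Y) => w1 w2; repeat case: ifP; lia.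
- by subst X'.
Qed.

Hypothesis disj : forall k l, (k <= L)%N -> (l <= M)%N -> P k <> Q l.

Lemma Pi_Q l : (l <= M)%N -> Pi (Q l) = Pi (Q 0).
Proof.
have nQ : forall l, (l <= M)%N -> ~ onP (Q l).
  by move=> l' l'M [k kL e]; exact: (disj _ _ kL l'M e).
elim: l => // l IH lM.
rewrite -IH ?(ltnW lM) //; symmetry; apply: Pi_step; first exact: stQ.
- exact/nQ/ltnW.
- exact: nQ.
- exact/posQ/ltnW.
- exact: posQ.
Qed.

Lemma omega_base X : omega X 0 = 0.
Proof.
apply: big1 => -[k /= kL] _; rewrite /ee.
have := posP _ (ltnW kL); case: ifP => //; lia.
Qed.

Lemma HPL_false : False.
Proof.
have [r1 r2 r3] := ord.
have := Pi_Q M (leqnn M); rewrite /Pi.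
rewrite [Q M]surjective_pairing [Q 0]surjective_pairing QM Q0 /= !omega_base.
move: r1 r2 r3; repeat case: ifP; lia.
Qed.

End HPL.
Section Ana.
Variable R : realType.

Lemma within_epsdelta (f : R -> R) (a b : R) :
  {within `[a, b], continuous f} -> forall x, x \in `[a, b] ->
  forall e, 0 < e -> exists2 d, 0 < d &
    forall y, y \in `[a, b] -> `|x - y| < d -> `|f x - f y| < e.
Proof.
move=> cf x xab e e0.
have := (subspace_continuousP _ _).1 cf x.
rewrite inE in xab; move/(_ xab) => /cvgrPdist_lt/(_ e e0).
rewrite /within /= => /nbhs_normP [d d0 hd].
exists d => // y yab xy; apply: hd => //=.

Qed.

Definition clamp (a b z : R) := if z < a then a else if b < z then b else z.

Lemma clamp_in a b z : a <= b -> clamp a b z \in `[a, b].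
Proof. move=> ab; rewrite /clamp in_itv /=; repeat case: ifP; lra. Qed.

Lemma clamp_id a b z : z \in `[a, b] -> clamp a b z = z.
Proof. rewrite /clamp in_itv /= => /andP[h1 h2]; repeat case: ifP; lra. Qed.

Lemma clamp_lip a b x y : a <= b -> `|clamp a b x - clamp a b y| <= `|x - y|.
Proof.
move=> ab; have h1 := ler_norm (x - y); have h2 : - (x - y) <= `|x - y| by rewrite -normrN ler_norm.
rewrite ler_norml; rewrite /clamp; repeat case: ifP; lra.
Qed.

Lemma clamp_cont (f : R -> R) a b : a <= b -> {within `[a, b], continuous f} ->
  continuous (fun z => f (clamp a b z)).
Proof.
move=> ab cf x; apply/cvgrPdist_lt => e e0.
have [d d0 hd] := @within_epsdelta f a b cf _ (clamp_in a b x ab) e e0.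

apply/nbhs_normP; exists d => //= y xy.
apply: hd; first exact: clamp_in.
have xy' : `|x - y| < d := xy.
exact: le_lt_trans (clamp_lip a b x y ab) xy'.
Qed.

Lemma prod_min (H : R * R -> R) lo hi : lo <= hi -> continuous H ->
  (forall s t, s \in `[lo, hi] -> t \in `[lo, hi] -> 0 < H (s, t)) ->
  exists2 mu, 0 < mu &
    forall s t, s \in `[lo, hi] -> t \in `[lo, hi] -> mu <= H (s, t).
Proof.
move=> lh cH Hpos.
pose A := `[lo, hi]%classic `*` `[lo, hi]%classic.
have A0 : A !=set0 by exists (lo, lo); split => /=; rewrite in_itv /= lexx lh.
have cA : compact A by apply: compact_setX; exact: segment_compact.
have [c cA' cmin] := compact_EVT_min A0 cA (@continuous_subspaceT _ _ A H cH).
exists (H c).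
  by case: c cA' cmin => s t; rewrite inE => -[/= hs ht] _; exact: Hpos.
by move=> s t hs ht; apply: cmin; rewrite inE; split.
Qed.

Lemma cont_fst : continuous (fun p : R * R => p.1).
Proof. by move=> p; exact: cvg_fst. Qed.
Lemma cont_snd : continuous (fun p : R * R => p.2).
Proof. by move=> p; exact: cvg_snd. Qed.

Lemma cont_comp1 (h : R -> R) : continuous h -> continuous (fun p : R * R => h p.1).
Proof. move=> ch p; apply: (continuous_comp (cont_fst p)); exact: ch. Qed.
Lemma cont_comp2 (h : R -> R) : continuous h -> continuous (fun p : R * R => h p.2).
Proof. move=> ch p; apply: (continuous_comp (cont_snd p)); exact: ch. Qed.

Lemma cont_add (u v : R * R -> R) : continuous u -> continuous v -> continuous (fun p => u p + v p).
Proof. by move=> cu cv p; apply: cvgD; [exact: cu | exact: cv]. Qed.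
Lemma cont_sub (u v : R * R -> R) : continuous u -> continuous v -> continuous (fun p => u p - v p).
Proof. by move=> cu cv p; apply: cvgB; [exact: cu | exact: cv]. Qed.
Lemma cont_norm (u : R * R -> R) : continuous u -> continuous (fun p => `|u p|).
Proof. by move=> cu p; apply: cvg_norm; exact: cu. Qed.
Lemma cont_scale (k : R) (u : R * R -> R) : continuous u -> continuous (fun p => k * u p).
Proof. by move=> cu p; apply: cvgMr; exact: cu. Qed.
Lemma cont_cst (k : R) : continuous (fun p : R * R => k).
Proof. by move=> p; exact: cvg_cst. Qed.

Lemma unif_cont (h : R -> R) lo hi : lo <= hi -> continuous h ->
  forall e, 0 < e -> exists2 d, 0 < d & forall s t, s \in `[lo, hi] ->
    t \in `[lo, hi] -> `|s - t| < d -> `|h s - h t| < e.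
Proof.
move=> lh ch e e0.
pose w (p : R * R) := e - `|h p.1 - h p.2|.
pose H (p : R * R) := `|p.1 - p.2| + 2^-1 * (w p + `|w p|).
have cw : continuous w.
  apply: cont_sub; first exact: cont_cst.
  by apply: cont_norm; apply: cont_sub; [exact: cont_comp1 | exact: cont_comp2].
have cH : continuous H.
  apply: cont_add; first by apply: cont_norm; apply: cont_sub; [exact: cont_fst|exact: cont_snd].
  by apply: cont_scale; apply: cont_add => //; exact: cont_norm.
have Hpos : forall s t, s \in `[lo, hi] -> t \in `[lo, hi] -> 0 < H (s, t).
  move=> s t _ _; rewrite /H /w /=.
  have hw : 0 <= (e - `|h s - h t|) + `|e - `|h s - h t| |.
    by have := ler_norm (- (e - `|h s - h t|)); rewrite normrN; lra.
  have [st|st] := eqVneq s t.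
    by rewrite st !subrr normr0 subr0 add0r ger0_norm; [lra | exact: ltW].
  apply: ltr_pwDl; first by rewrite normr_gt0 subr_eq0.
  by rewrite mulr_ge0.
have [mu mu0 hmu] := prod_min H lo hi lh cH Hpos.
exists mu => // s t hs ht st; rewrite ltNge; apply/negP => hle.
have := hmu s t hs ht; rewrite /H /w /=.
have -> : `|e - `|h s - h t| | = - (e - `|h s - h t|) by rewrite ler0_norm // subr_le0.
rewrite subrr mulr0 addr0 => /(lt_le_trans st); by rewrite ltxx.
Qed.

Lemma last_zero (d : R -> R) x z : continuous d -> x <= z -> d x = 0 ->
  exists2 p, (x <= p <= z) /\ d p = 0 & forall y, p < y <= z -> d y != 0.
Proof.
move=> cd xz dx0.
pose A := `[x, z]%classic `&` d @^-1` `[0, 0]%classic.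
have cA : compact A.
  apply: compact_closedI; first exact: segment_compact.
  exact: ((continuous_closedP d).1 cd _ (@itv_closed _ R 0 0)).
have A0 : A !=set0 by exists x; split => /=; rewrite in_itv /= ?lexx ?xz ?dx0 ?lexx.
have cid : {within A, continuous (fun y : R => y)}.
  by apply: continuous_subspaceT => y; exact: cvg_id.
have [p pA pmax] := compact_EVT_max A0 cA cid.
move: (pA); rewrite inE => -[/=]; rewrite !in_itv /= => /andP[xp pz] /andP[dp0 dp0'].
exists p; first by split; [rewrite xp pz | apply/le_anti; rewrite dp0 dp0'].
move=> y /andP[py yz]; apply/negP => /eqP dy0.
have : y <= p.
  apply: pmax; rewrite inE; split => /=; rewrite in_itv /= ?yz ?dy0 ?lexx //.
  by rewrite (le_trans xp) // ltW.
by rewrite leNgt py.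
Qed.

Lemma first_zero (d : R -> R) z x : continuous d -> z <= x -> d x = 0 ->
  exists2 q, (z <= q <= x) /\ d q = 0 & forall y, z <= y < q -> d y != 0.
Proof.
move=> cd zx dx0.
have cd' : continuous (fun y => d (- y)).
  move=> y; apply: continuous_comp; last exact: cd.
  exact: (cvgN (@cvg_id _ (nbhs y))).
pose mx := - x; pose mz := - z.
have e1 : mx <= mz by rewrite /mx /mz lerN2.
have e2 : d (- mx) = 0 by rewrite /mx opprK.
have [p [/andP[h1 h2] dp] hp] := last_zero (fun y => d (- y)) mx mz cd' e1 e2.
exists (- p).
  by split; [rewrite -lerN2 opprK h2 /= -lerN2 opprK | ].
move=> y /andP[zy yp]; rewrite -[y]opprK; apply: hp.
by rewrite ltrNr yp /= lerN2.
Qed.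

Lemma one_signed (d : R -> R) x1 x2 : continuous d -> x1 < x2 -> d x1 = 0 ->
  d x2 = 0 -> exists p q (B : R -> R),
  [/\ x1 <= p, p < q, q <= x2, B p = 0 & B q = 0] /\
  [/\ continuous B, (forall y, B y = d y) \/ (forall y, B y = - d y) &
      forall y, p <= y <= q -> 0 <= B y].
Proof.
move=> cd x12 d1 d2.
have [all0|] := pselect (forall y, x1 <= y <= x2 -> d y = 0).
  exists x1, x2, d; split; split => //; first by left.
  by move=> y hy; rewrite all0.
move=> /existsNP [z0 /not_implyP [hz /eqP dz]].
move: hz => /andP[xz zx].
pose B := if 0 < d z0 then d else (fun y => - d y).
have Bd : (forall y, B y = d y) \/ (forall y, B y = - d y).
  by rewrite /B; case: ifP => _; [left | right].
have cB : continuous B.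
  by rewrite /B; case: ifP => _ //; move=> y; apply: cvgN; exact: cd.
have Bz : 0 < B z0.
  rewrite /B; case: ifP => // /negbT; rewrite -leNgt => dle.
  by rewrite oppr_gt0 lt_neqAle dz dle.
have B1 : B x1 = 0 by case: Bd => ->; rewrite d1 ?oppr0.
have B2 : B x2 = 0 by case: Bd => ->; rewrite d2 ?oppr0.
have [p [/andP[xp pz] Bp] hp] := last_zero B x1 z0 cB xz B1.
have [q [/andP[zq qx] Bq] hq] := first_zero B z0 x2 cB zx B2.
have pz' : p < z0.
  rewrite lt_neqAle pz andbT; apply/eqP => e; move: Bz; rewrite -e Bp; by rewrite ltxx.
exists p, q, B; split; split => //; first exact: lt_le_trans zq.
move=> y /andP[py yq]; rewrite leNgt; apply/negP => By.
have [yz|zy] := leP y z0.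
  have [w wI Bw] : exists2 w, w \in `[y, z0] & B w = 0.
    apply: IVT => //; first exact: continuous_subspaceT.
    by rewrite ge_min le_max (ltW By) (ltW Bz) !orbT.
  move: wI; rewrite in_itv /= => /andP[yw wz].
  have yw' : y < w by rewrite lt_neqAle yw andbT; apply/eqP => e; move: By; rewrite e Bw ltxx.
  by move: (hp w); rewrite (le_lt_trans py yw') wz Bw eqxx => /(_ isT).
have [w wI Bw] : exists2 w, w \in `[z0, y] & B w = 0.
  apply: IVT => //; first exact: ltW.
    exact: continuous_subspaceT.
  by rewrite ge_min le_max (ltW By) (ltW Bz) !orbT.
move: wI; rewrite in_itv /= => /andP[zw wy].
have wy' : w < y by rewrite lt_neqAle wy andbT; apply/eqP => e; move: By; rewrite -e Bw ltxx.
by move: (hq w); rewrite zw (lt_le_trans wy' yq) Bw eqxx => /(_ isT).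
Qed.

Lemma floor_close (x y : R) : `|x - y| < 1 ->
  -1 <= Num.floor x - Num.floor y <= 1.
Proof.
rewrite ltr_norml => /andP[h1 h2].
have := floor_itv x; have := floor_itv y.
move: (Num.floor x) (Num.floor y) => X Y.
rewrite !intrD => /andP[y1 y2] /andP[x1 x2].
have a1 : (X - Y)%:~R < (2%:~R : R) by rewrite intrB; lra.
have a2 : (-2%:~R : R) < (X - Y)%:~R by rewrite intrB; lra.
move: a1 a2; rewrite -(intrN R 2) !ltr_int; lia.
Qed.

Lemma floor_eq_close (x y : R) : Num.floor x = Num.floor y -> `|x - y| < 1.
Proof.
move=> e; have := floor_itv x; have := floor_itv y; rewrite e.
move: (Num.floor y) => Y; rewrite intrD => /andP[y1 y2] /andP[x1 x2].
rewrite ltr_norml; apply/andP; split; lra.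
Qed.

Lemma floor_lt (x y : R) : x + 1 <= y -> Num.floor x < Num.floor y.
Proof.
move=> xy.
have : Num.floor x + 1 <= Num.floor y.
  rewrite floor_ge_int intrD; have := floor_le x; lra.
lia.
Qed.

Lemma div_plus1 (p q h : R) : 0 < h -> p + h <= q -> p / h + 1 <= q / h.
Proof.
move=> h0 pq.
have : 1 <= (q - p) / h by rewrite ler_pdivlMr // mul1r lerBrDl.
by rewrite mulrBl; lra.
Qed.

Lemma scaled_close (s m : nat) (h x y : R) : 0 < h -> (0 < m)%N -> (s <= m)%N ->
  `|x - y| < h / m%:R -> `|s%:R * x / h - s%:R * y / h| < 1.
Proof.
move=> h0 m0 sm xy.
have mR : 0 < (m%:R : R) by rewrite ltr0n.
rewrite -mulrBl -mulrBr !normrM normr_nat normfV (gtr0_norm h0) ltr_pdivrMr // mul1r.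
have : `|x - y| * m%:R < h by rewrite -ltr_pdivlMr.
have : (s%:R : R) <= m%:R by rewrite ler_nat.
have := normr_ge0 (x - y); nra.
Qed.

Lemma half_le1 k N : (k <= N.*2)%N -> (k./2 + odd k <= N)%N.
Proof. move: (odd k) (k./2) (odd_double_half k) => [] j e /=; lia. Qed.
Lemma half_lt1 k N : (k < N.*2)%N -> (k./2 < N)%N.
Proof. move: (odd k) (k./2) (odd_double_half k) => [] j e /=; lia. Qed.
Lemma half_le2 k N : (k <= N.*2)%N -> (k./2 <= N)%N.
Proof. move: (odd k) (k./2) (odd_double_half k) => [] j e /=; lia. Qed.

Lemma crossing (A B : R -> R) (lo hi e0 e1 : R) (m n : nat) :
  continuous A -> continuous B -> lo <= hi ->
  e0 \in `[lo, hi] -> e1 \in `[lo, hi] ->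
  (forall z, z \in `[lo, hi] -> 0 <= B z) ->
  B e0 = 0 -> B e1 = 0 -> (0 < n)%N -> (n < m)%N ->
  0 < A e0 -> m%:R * A e0 < n%:R * A e1 ->
  forall eps, 0 < eps -> exists s t, [/\ s \in `[lo, hi], t \in `[lo, hi],
    `|m%:R * A s - n%:R * A t| < eps & `|m%:R * B s - n%:R * B t| < eps].
Proof.
move=> cA cB lh e0I e1I Bpos B0 B1 n0 nm A0 mn eps eps0.
have m0 : (0 < m)%N by exact: ltn_trans nm.
have mR0 : 0 < (m%:R : R) by rewrite ltr0n.
have nR0 : 0 < (n%:R : R) by rewrite ltr0n.
have nmR : (n%:R : R) + 1 <= m%:R by rewrite natr1 ler_nat.
have v0 : 0 < A e1.
  have : 0 < n%:R * A e1 by apply: lt_trans mn; exact: mulr_gt0.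
  by rewrite pmulr_rgt0.
have [h [h0 hle1 hle2 hle3 hle4]] : exists h, [/\ 0 < h, h <= eps / 3, h <= A e0,
    h <= n%:R * A e1 - m%:R * A e0 & h <= A e1].
  exists (Num.min (Num.min (eps / 3) (A e0)) (Num.min (n%:R * A e1 - m%:R * A e0) (A e1))).
  split; rewrite ?lt_min ?divr_gt0 // ?A0 ?v0 ?subr_gt0 ?mn //; rewrite !ge_min lexx ?orbT //.
have hm0 : 0 < h / m%:R by exact: divr_gt0.
have [dA dA0 hdA] := unif_cont A lo hi lh cA (h / m%:R) hm0.
have [dB dB0 hdB] := unif_cont B lo hi lh cB (h / m%:R) hm0.
have [d [d0 ddA ddB]] : exists d, [/\ 0 < d, d <= dA & d <= dB].
  exists (Num.min dA dB); split; [by rewrite lt_min dA0 dB0 | by rewrite ge_min lexx | by rewrite ge_min lexx orbT].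
have [N NR0 stepz] : exists2 N : nat, 0 < (N%:R : R) & `|e1 - e0| / N%:R < d.
  exists (Num.truncn (`|e1 - e0| / d)).+1; first by rewrite ltr0n.
  rewrite ltr_pdivrMr ?ltr0n // mulrC -ltr_pdivrMr //; exact: truncnS_gt.
pose z (i : nat) := e0 + i%:R / N%:R * (e1 - e0).
have z0 : z 0%N = e0 by rewrite /z mul0r mul0r addr0.
have zN : z N = e1 by rewrite /z divff ?gt_eqF // mul1r addrC subrK.
have zI : forall i, (i <= N)%N -> z i \in `[lo, hi].
  move=> i iN; move: e0I e1I; rewrite /z !in_itv /= => /andP[a1 a2] /andP[b1 b2].
  have t0 : 0 <= i%:R / N%:R :> R by rewrite divr_ge0 ?ler0n // ltW.
  have t1 : i%:R / N%:R <= 1 :> R by rewrite ler_pdivrMr // mul1r ler_nat.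
  move: (i%:R / N%:R) t0 t1 => t t0 t1.
  have p1 : 0 <= t * (e1 - lo) by rewrite mulr_ge0 // subr_ge0.
  have p2 : 0 <= (1 - t) * (e0 - lo) by rewrite mulr_ge0 // subr_ge0.
  have p3 : 0 <= t * (hi - e1) by rewrite mulr_ge0 // subr_ge0.
  have p4 : 0 <= (1 - t) * (hi - e0) by rewrite mulr_ge0 // subr_ge0.
  apply/andP; split; nra.
have zstep : forall i, `|z i - z i.+1| < d.
  move=> i; have -> : z i - z i.+1 = - ((e1 - e0) / N%:R).
    by rewrite /z -natr1; field; rewrite gt_eqF.
  by rewrite normrN normrM normfV (gtr0_norm NR0).
have stA : forall i, (i < N)%N -> `|A (z i) - A (z i.+1)| < h / m%:R.
  move=> i iN; apply: hdA; [exact/zI/ltnW | exact: zI |].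
  exact: (lt_le_trans (zstep i)).
have stB : forall i, (i < N)%N -> `|B (z i) - B (z i.+1)| < h / m%:R.
  move=> i iN; apply: hdB; [exact/zI/ltnW | exact: zI |].
  exact: (lt_le_trans (zstep i)).
pose path (s k : nat) : int * int :=
  (Num.floor (s%:R * A (z (k./2 + odd k)%N) / h), Num.floor (s%:R * B (z k./2) / h)).
have halfS : forall k, k.+1./2 = (odd k + k./2)%N by move=> k; rewrite -uphalfE uphalf_half.
have hk : forall k, (k <= N.*2)%N -> (k./2 + odd k <= N)%N by move=> k; exact: half_le1.
have hk' : forall k, (k < N.*2)%N -> (k./2 < N)%N by move=> k; exact: half_lt1.
have hk2 : forall k, (k <= N.*2)%N -> (k./2 <= N)%N by move=> k; exact: half_le2.
have pstep : forall s, (s <= m)%N -> forall k, (k < N.*2)%N -> stepl (path s k) (path s k.+1).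
  move=> s sm k kN; rewrite /path /stepl /= ?halfS ?uphalf_half ?oddS.
  have iN := hk' k kN.
  case: (odd k) => /=.
  - left; split; first by rewrite addn0 addnC.
    rewrite add1n; apply: floor_close.
    apply: (scaled_close s m h _ _ h0 m0 sm); exact: stB.
  - right; split; first by rewrite add0n.
    rewrite add0n addn0 addn1; apply: floor_close.
    apply: (scaled_close s m h _ _ h0 m0 sm); exact: stA.
have ppos : forall s k, (k <= N.*2)%N -> 0 <= (path s k).2.
  move=> s k kN; rewrite /path /= floor_ge0 divr_ge0 ?(ltW h0) // mulr_ge0 ?ler0n //.
  exact/Bpos/zI/hk2.
have p0 : forall s, path s 0%N = (Num.floor (s%:R * A e0 / h), 0).
  by move=> s; rewrite /path /= z0 B0 mulr0 mul0r floor0.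
have pN : forall s, path s N.*2 = (Num.floor (s%:R * A e1 / h), 0).
  by move=> s; rewrite /path doubleK odd_double addn0 zN B1 mulr0 mul0r floor0.
have [k [l [kL lL ekl]]] : exists k l, [/\ (k <= N.*2)%N, (l <= N.*2)%N & path n k = path m l].
  case: (pselect (exists k l, [/\ (k <= N.*2)%N, (l <= N.*2)%N & path n k = path m l])) => // hne.
  exfalso; apply: (@HPL_false (path n) (path m) N.*2 N.*2).
  - exact: pstep (ltnW nm).
  - exact: pstep (leqnn m).
  - exact: ppos.
  - exact: ppos.
  - by rewrite p0.
  - by rewrite pN.
  - by rewrite p0.
  - by rewrite pN.
  - rewrite !p0 !pN /=; split; apply: floor_lt; apply: div_plus1 => //.
    + have : ((n%:R : R) + 1) * A e0 <= m%:R * A e0 by rewrite ler_pM2r.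
      rewrite mulrDl mul1r; lra.
    + lra.
    + have : ((n%:R : R) + 1) * A e1 <= m%:R * A e1 by rewrite ler_pM2r.
      rewrite mulrDl mul1r; lra.
  - by move=> k l kL lL e; apply: hne; exists k, l.
have adj : forall s, (s <= m)%N -> forall r (o : bool), (r + o <= N)%N ->
    `|s%:R * A (z r) - s%:R * A (z (r + o)%N)| < h.
  move=> s sm r [] /=; last by rewrite addn0 subrr normr0.
  rewrite addn1 => rN; rewrite -mulrBr normrM normr_nat.
  move: (stA r rN) (normr_ge0 (A (z r) - A (z r.+1))).
  move: (`|A (z r) - A (z r.+1)|) => D D1 D0.
  have e : (m%:R : R) * (h / m%:R) = h by rewrite mulrC -mulrA mulVf ?mulr1 // gt_eqF.
  have sm' : (s%:R : R) <= m%:R by rewrite ler_nat.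
  have p1 : 0 <= (m%:R - s%:R) * D by rewrite mulr_ge0 // subr_ge0.
  have p2 : 0 < m%:R * (h / m%:R - D) by rewrite mulr_gt0 // subr_gt0.
  nra.
case: ekl; rewrite /path => eX eY.
have eB := floor_eq_close _ _ eY.
rewrite -mulrBl normrM normfV (gtr0_norm h0) ltr_pdivrMr // mul1r in eB.
have eA := floor_eq_close _ _ eX.
rewrite -mulrBl normrM normfV (gtr0_norm h0) ltr_pdivrMr // mul1r in eA.
exists (z l./2), (z k./2); split.
- exact/zI/hk2.
- exact/zI/hk2.
- have a1 := adj m (leqnn m) l./2 (odd l) (hk l lL).
  have a2 := adj n (ltnW nm) k./2 (odd k) (hk k kL).
  have t1 := ler_distD (m%:R * A (z (l./2 + odd l)%N)) (m%:R * A (z l./2)) (n%:R * A (z k./2)).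
  have t2 := ler_distD (n%:R * A (z (k./2 + odd k)%N)) (m%:R * A (z (l./2 + odd l)%N)) (n%:R * A (z k./2)).
  have eA' : `|m%:R * A (z (l./2 + odd l)%N) - n%:R * A (z (k./2 + odd k)%N)| < h.
    by rewrite distrC.
  have a2' : `|n%:R * A (z (k./2 + odd k)%N) - n%:R * A (z k./2)| < h.
    by rewrite distrC.
  lra.
- by rewrite distrC; lra.
Qed.

End Ana.

Lemma mean_const (R : realType) (a b : R) f g G : is_mean_on a b (LFG f g G) ->
  forall z, z \in `[a, b] -> forall m, (0 < m)%N -> G (f z *+ m, g z *+ m) = z.
Proof.
move=> hm z zab m m0.
have ne : nseq m z != [::] by case: m m0.
have al : all (fun x => x \in `[a, b]) (nseq m z).
  by apply/allP => x; rewrite mem_nseq => /andP[_ /eqP ->].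
have [[x xs xle] [y ys ley]] := hm _ ne al.
move: xs ys; rewrite !mem_nseq m0 /= => /eqP ex /eqP ey.
move: xle ley; rewrite ex ey /LFG !big_nseq !iter_addr_0 => h1 h2.
exact/le_anti/andP.
Qed.

Theorem lemma5p4 (R : realType) (a b : R) (f g : R -> R) (G : R * R -> R) :
  a <= b ->
  {within `[a, b], continuous f} ->
  {within `[a, b], continuous g} ->
  continuous G ->
  (forall p : R * R, G p \in `[a, b]) ->
  is_mean_on a b (LFG f g G) ->
  repetition_invariant a b (LFG f g G) ->
  ~ (exists e : R, negligible_element a b (LFG f g G) e) ->
  (forall x, x \in `[a, b] -> 0 < g x) ->
  {in `[a, b] &, injective (fun x => f x / g x)}.
Proof.
move=> ab cf cg _ _ hmean _ _ gpos.
pose fh z := f (@clamp R a b z); pose gh z := g (@clamp R a b z).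
have cfh : continuous fh := @clamp_cont R f a b ab cf.
have cgh : continuous gh := @clamp_cont R g a b ab cg.
have fhE : forall z, z \in `[a, b] -> fh z = f z by move=> z zI; rewrite /fh clamp_id.
have ghE : forall z, z \in `[a, b] -> gh z = g z by move=> z zI; rewrite /gh clamp_id.
have key : forall s t, s \in `[a, b] -> t \in `[a, b] -> forall m n : nat,
    (0 < m)%N -> (0 < n)%N -> m%:R * fh s = n%:R * fh t ->
    m%:R * gh s = n%:R * gh t -> s = t.
  move=> s t sI tI m n m0 n0; rewrite !fhE ?ghE // !mulr_natl => e1 e2.
  by rewrite -(@mean_const R a b f g G hmean s sI m m0) -(@mean_const R a b f g G hmean t tI n n0) e1 e2.
move=> x1 x2 hx1 hx2 /= heq.
case: (eqVneq x1 x2) => // hne; exfalso.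
wlog x12 : x1 x2 hx1 hx2 heq hne / x1 < x2.
  move=> W; case: (ltgtP x1 x2) => [h|h|h]; [exact: (W x1 x2) | | by move: hne; rewrite h eqxx].
  by apply: (W x2 x1) => //; rewrite eq_sym.
have g1 : g x1 != 0 by apply: lt0r_neq0; exact: gpos.
have g2 : g x2 != 0 by apply: lt0r_neq0; exact: gpos.
pose c := f x1 / g x1.
pose del z := fh z - c * gh z.
have cdel : continuous del.
  move=> z; apply: cvgB; first exact: cfh.
  by apply: cvgM; [exact: cvg_cst | exact: cgh].
have d1 : del x1 = 0 by rewrite /del fhE // ghE // /c divfK // subrr.
have d2 : del x2 = 0 by rewrite /del fhE // ghE // /c heq divfK // subrr.
have [p [q [B [[x1p pq qx2 Bp Bq] [cB Bd Bpos]]]]] := @one_signed R del x1 x2 cdel x12 d1 d2.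
have inab : forall y, p <= y <= q -> y \in `[a, b].
  move=> y /andP[py yq]; move: hx1 hx2; rewrite !in_itv /= => /andP[a1 _] /andP[_ b2].
  apply/andP; split; [exact: le_trans a1 (le_trans x1p py) | exact: le_trans yq (le_trans qx2 b2)].
have delp : del p = 0 by case: Bd Bp => ->; [| move/eqP; rewrite oppr_eq0 => /eqP].
have delq : del q = 0 by case: Bd Bq => ->; [| move/eqP; rewrite oppr_eq0 => /eqP].
have hmain : forall e0 e1, e0 \in `[p, q] -> e1 \in `[p, q] -> B e0 = 0 -> B e1 = 0 ->
    gh e0 < gh e1 -> False.
  move=> e0 e1 e0I e1I Be0 Be1 lt01.
  have e0ab : e0 \in `[a, b] by apply: inab; move: e0I; rewrite in_itv.
  have u0 : 0 < gh e0 by rewrite ghE // gpos.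
  have vu : 0 < gh e1 - gh e0 by rewrite subr_gt0.
  have [n n0 hn] : exists2 n : nat, (0 < n)%N & gh e0 / (gh e1 - gh e0) < n%:R.
    by exists (Num.truncn (gh e0 / (gh e1 - gh e0))).+1 => //; exact: truncnS_gt.
  have mn : n.+1%:R * gh e0 < n%:R * gh e1.
    move: hn; rewrite ltr_pdivrMr // -natr1 => hn; nra.
  pose D (pr : R * R) := `|n.+1%:R * fh pr.1 - n%:R * fh pr.2| +
    `|n.+1%:R * gh pr.1 - n%:R * gh pr.2|.
  have cD : continuous D.
    apply: cont_add; apply: cont_norm; apply: cont_sub; apply: cont_scale;
      by [exact: cont_comp1 | exact: cont_comp2].
  have Dpos : forall s t, s \in `[a, b] -> t \in `[a, b] -> 0 < D (s, t).
    move=> s t sI tI; rewrite /D /= lt_neqAle addr_ge0 // andbT.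
    apply/eqP => /esym/eqP; rewrite paddr_eq0 // !normr_eq0 !subr_eq0.
    move=> /andP[/eqP E1 /eqP E2].
    have st := key s t sI tI n.+1 n isT n0 E1 E2.
    move: E2; rewrite st => E2.
    have : (n.+1%:R - n%:R) * gh t = 0 by rewrite mulrBl E2 subrr.
    by rewrite -natrB // subSnn mul1r => /eqP; rewrite gt_eqF // ghE // gpos.
  have [mu mu0 hmu] := @prod_min R D a b ab cD Dpos.
  have c2 : 0 < `|c| + 2 by rewrite ltr_wpDl.
  pose eps := mu / (`|c| + 2).
  have eps0 : 0 < eps by rewrite divr_gt0.
  have Bpos' : forall z, z \in `[p, q] -> 0 <= B z by move=> z; rewrite in_itv /=; exact: Bpos.
  have [s [t [sI tI hA hB]]] := @crossing R gh B p q e0 e1 n.+1 n cgh cB (ltW pq) e0I e1I Bpos'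
    Be0 Be1 n0 (ltnSn n) u0 mn eps eps0.
  have sI' : s \in `[a, b] by apply: inab; move: sI; rewrite in_itv.
  have tI' : t \in `[a, b] by apply: inab; move: tI; rewrite in_itv.
  have := hmu s t sI' tI'; rewrite /D /=.
  have eq1 : n.+1%:R * fh s - n%:R * fh t =
      c * (n.+1%:R * gh s - n%:R * gh t) + (n.+1%:R * del s - n%:R * del t).
    by rewrite /del; ring.
  have eq2 : `|n.+1%:R * del s - n%:R * del t| = `|n.+1%:R * B s - n%:R * B t|.
    by case: Bd => e; rewrite !e // -normrN; congr `|_|; ring.
  have t1 := ler_normD (c * (n.+1%:R * gh s - n%:R * gh t)) (n.+1%:R * del s - n%:R * del t).
  rewrite normrM eq2 -eq1 in t1.
  have t2 : `|c| * `|n.+1%:R * gh s - n%:R * gh t| <= `|c| * eps.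
    by rewrite ler_wpM2l // ltW.
  have e3 : (`|c| + 2) * eps = mu by rewrite /eps mulrC divfK // gt_eqF.
  move=> hm; lra.
have pI : p \in `[a, b] by apply: inab; rewrite lexx ltW.
have qI : q \in `[a, b] by apply: inab; rewrite lexx ltW.
have [lt|lt|eqg] := ltgtP (gh p) (gh q).
- by apply: (hmain p q) => //; rewrite in_itv /= lexx ltW.
- by apply: (hmain q p) => //; rewrite in_itv /= lexx ltW.
- have fpq : 1%:R * fh p = 1%:R * fh q.
    by move: delp delq; rewrite /del eqg => /eqP; rewrite subr_eq0 => /eqP -> /eqP; rewrite subr_eq0 => /eqP ->.
  have gpq : 1%:R * gh p = 1%:R * gh q by rewrite eqg.
  have := key p q pI qI 1 1 isT isT fpq gpq.
  by move=> e; move: pq; rewrite e ltxx.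
Qed.
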